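(* Let $G_{\lambda,k}$ be a skeleton of a connected graph $G$, and let $G''=G_{(\lambda,k)_{(2,2)}}$. If two sets of vertices are $n$-disjoint in $G''$ for some $n>1$, then their preimages in $G_{\lambda,k}$ (under the natural map $G_{\lambda,k}\to G''$) are $(n+\frac n2)$-disjoint.
   Context: $d$ is the graph metric of the relevant graph. Sets $X,Y$ are $r$-disjoint if $d(a,b)>r$ for all $a\in X,b\in Y$. A set $X$ is $k$-connected if any two of its points are joined by a finite sequence in $X$ with consecutive distances $\le k$. Skeleton $\Gamma_{\lambda,k}$ of a connected graph $\Gamma$ (root $x_0$, scale $\lambda\ge1$, connectivity $k\ge1$): layers $A_{N,\lambda}=\{x: N\lambda<d(x,x_0)\le(N+1)\lambda\}$, $N\in\mathbb Z$; blocks are the maximal $k$-connected subsets of layers (distances in $\Gamma$); $\Gamma_{\lambda,k}$ has a vertex per block and an edge between two blocks iff an edge of $\Gamma$ joins them; the natural map sends each vertex to its block. $G_{(\lambda,k)_{(2,2)}}$ is the skeleton of the graph $G_{\lambda,k}$ with scale $2$ and connectivity $2$, rooted at the block containing the root of $G$. *)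

(* Defs.v *)
From Stdlib Require Import Reals Arith.
Open Scope R_scope.

Section Graphs.
Variable V : Type.
Variable adj : V -> V -> Prop.

Inductive walk : nat -> V -> V -> Prop :=
| walk0 x : walk 0 x x
| walkS n x y z : adj x y -> walk n y z -> walk (S n) x z.

Definition dist_le (x y : V) (n : nat) : Prop :=
  exists m, (m <= n)%nat /\ walk m x y.

Definition dist_eq (x y : V) (n : nat) : Prop :=
  dist_le x y n /\ forall j, (j < n)%nat -> ~ dist_le x y j.

Definition symmetric_graph : Prop := forall x y, adj x y -> adj y x.
Definition connected_graph : Prop := forall x y, exists n, dist_le x y n.

Definition r_disjoint (X Y : V -> Prop) (r : R) : Prop :=
  forall a b m, X a -> Y b -> walk m a b -> r < INR m.

Definition layer (x0 : V) (lam : R) (N : Z) (x : V) : Prop :=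
  exists d, dist_eq x x0 d /\ IZR N * lam < INR d /\ INR d <= (IZR N + 1) * lam.

Inductive kchain (X : V -> Prop) (k : nat) : V -> V -> Prop :=
| kchain0 x : X x -> kchain X k x x
| kchainS x y z : X x -> dist_le x y k -> kchain X k y z -> kchain X k x z.

Definition k_connected (X : V -> Prop) (k : nat) : Prop :=
  forall x y, X x -> X y -> kchain X k x y.

Definition is_block (x0 : V) (lam : R) (k : nat) (B : V -> Prop) : Prop :=
  exists N : Z,
    (forall x, B x -> layer x0 lam N x) /\
    (exists x, B x) /\
    k_connected B k /\
    (forall B' : V -> Prop,
        (forall x, B x -> B' x) -> (forall x, B' x -> layer x0 lam N x) ->
        k_connected B' k -> forall x, B' x -> B x).

End Graphs.

Arguments walk {V} adj.
Arguments dist_le {V} adj.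
Arguments dist_eq {V} adj.
Arguments symmetric_graph {V} adj.
Arguments connected_graph {V} adj.
Arguments r_disjoint {V} adj.
Arguments is_block {V} adj.

Definition skel_V {V : Type} (adj : V -> V -> Prop) (x0 : V) (lam : R) (k : nat)
  : Type := { B : V -> Prop | is_block adj x0 lam k B }.

Definition skel_adj {V : Type} (adj : V -> V -> Prop) (x0 : V) (lam : R) (k : nat)
  (B1 B2 : skel_V adj x0 lam k) : Prop :=
  B1 <> B2 /\ exists x y, proj1_sig B1 x /\ proj1_sig B2 y /\ adj x y.

(* preimage of a set S of skeleton vertices under the natural map
   (vertex |-> block containing it) *)
Definition skel_preimage {V : Type} (adj : V -> V -> Prop) (x0 : V) (lam : R) (k : nat)
  (S : skel_V adj x0 lam k -> Prop) : V -> Prop :=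
  fun v => exists B, S B /\ proj1_sig B v.

(* Main.v *)
Require Import Defs.
From Stdlib Require Import Reals Arith.
From Stdlib Require Import Lia Lra ZArith Classical FunctionalExtensionality PropExtensionality.
Open Scope R_scope.

Lemma walk_app {W} (e : W -> W -> Prop) m n x y z :
  walk e m x y -> walk e n y z -> walk e (m+n) x z.
Proof. induction 1; intros; simpl; [assumption| econstructor; eauto]. Qed.

Lemma walk_snoc {W} (e : W -> W -> Prop) m x y z : walk e m x y -> e y z -> walk e (S m) x z.
Proof. intros H1 H2. replace (S m) with (m+1)%nat by lia. eapply walk_app; eauto.
  econstructor; eauto. constructor. Qed.

Lemma walk_rev {W} (e : W -> W -> Prop) (Hs : symmetric_graph e) m x y :
  walk e m x y -> walk e m y x.
Proof. induction 1. constructor. eapply walk_snoc; eauto. Qed.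

Lemma dist_le_sym {W} (e : W -> W -> Prop) (Hs : symmetric_graph e) x y n :
  dist_le e x y n -> dist_le e y x n.
Proof. intros [m [h H]]. exists m; split; auto. apply walk_rev; auto. Qed.

Lemma dist_eq_unique {W} (e : W -> W -> Prop) x y d1 d2 :
  dist_eq e x y d1 -> dist_eq e x y d2 -> d1 = d2.
Proof. intros [H1 H1'] [H2 H2'].
  destruct (lt_eq_lt_dec d1 d2) as [[h|h]|h];
  [exfalso; apply (H2' d1 h H1) | exact h | exfalso; apply (H1' d2 h H2)]. Qed.

Lemma dist_le_eq {W} (e : W -> W -> Prop) : forall n x y, dist_le e x y n -> exists d, dist_eq e x y d.
Proof. intro n. induction n as [n IH] using lt_wf_ind. intros x y H.
  destruct (classic (exists j, (j < n)%nat /\ dist_le e x y j)) as [[j [hj Hj]]|hn].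
  - eapply IH; eauto.
  - exists n. split; auto. intros j hj Hj. apply hn; eauto. Qed.

Lemma nbr_dist {W} (e : W -> W -> Prop) (Hs : symmetric_graph e) r u w du dw :
  e u w -> dist_eq e u r du -> dist_eq e w r dw -> (dw <= S du)%nat.
Proof. intros Huw [[m [hm Hm]] _] [_ Hw']. destruct (le_lt_dec dw (S du)) as [h|h]; auto.
  exfalso. apply (Hw' (S du) h). exists (S m). split. lia. econstructor. apply Hs; eauto. exact Hm. Qed.

Lemma lay_conv N d : (IZR N * 2 < INR d /\ INR d <= (IZR N + 1) * 2) <-> (2*N < Z.of_nat d <= 2*N+2)%Z.
Proof. rewrite INR_IZR_INZ. rewrite <- plus_IZR, <- !mult_IZR. split; intros [h1 h2].
  - apply lt_IZR in h1; apply le_IZR in h2; lia.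
  - split; [apply IZR_lt|apply IZR_le]; lia. Qed.

Lemma layer_Z {W} (e : W -> W -> Prop) r N v :
  layer W e r 2 N v <-> exists d, dist_eq e v r d /\ (2*N < Z.of_nat d <= 2*N+2)%Z.
Proof. unfold layer. split; intros [d [H1 H2]]; exists d; split; auto; apply lay_conv; auto. Qed.

Lemma layer_unique {W} (e : W -> W -> Prop) r N1 N2 v :
  layer W e r 2 N1 v -> layer W e r 2 N2 v -> N1 = N2.
Proof. intros H1 H2. apply layer_Z in H1 as [d1 [D1 h1]]. apply layer_Z in H2 as [d2 [D2 h2]].
  pose proof (dist_eq_unique e _ _ _ _ D1 D2). subst. lia. Qed.

Lemma layer_exists {W} (e : W -> W -> Prop) r v d : dist_eq e v r d -> exists N, layer W e r 2 N v.
Proof. intro H. exists ((Z.of_nat d - 1) / 2)%Z. apply layer_Z. exists d. split; auto.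
  pose proof (Z.div_mod (Z.of_nat d - 1) 2). pose proof (Z.mod_pos_bound (Z.of_nat d - 1) 2).
  lia. Qed.

Section K.
Lemma kchain_start {W e X k} {x y : W} : kchain W e X k x y -> X x.
Proof. destruct 1; auto. Qed.
Lemma kchain_end {W e X k} {x y : W} : kchain W e X k x y -> X y.
Proof. induction 1; auto. Qed.
Lemma kchain_app {W e X k} {x y z : W} : kchain W e X k x y -> kchain W e X k y z -> kchain W e X k x z.
Proof. induction 1; intros; auto. econstructor; eauto. Qed.
Lemma kchain_mono {W e X Y k} {x y : W} : (forall z, X z -> Y z) -> kchain W e X k x y -> kchain W e Y k x y.
Proof. intros HXY H. induction H. constructor; auto. econstructor; eauto. Qed.
Lemma kchain_rev {W e X k} (Hs : symmetric_graph e) {x y : W} : kchain W e X k x y -> kchain W e X k y x.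
Proof. induction 1. constructor; auto. apply (kchain_app IHkchain).
  apply (kchainS W e X k y x x (kchain_start H1)); [apply dist_le_sym; auto | constructor; auto]. Qed.
End K.

Lemma block_exists {W} (e : W -> W -> Prop) (Hs : symmetric_graph e) r N v :
  layer W e r 2 N v -> exists B : skel_V e r 2 2, proj1_sig B v.
Proof. intro Hv. set (L := layer W e r 2 N). set (C := fun y => kchain W e L 2 v y).
  assert (lift : forall x y, kchain W e L 2 x y -> C x -> kchain W e C 2 x y).
  { induction 1 as [x Hx | x y z Hx Hxy Hyz IH]; intro Cx.
    - constructor; auto.
    - econstructor; eauto. apply IH. unfold C. eapply kchain_app; [exact Cx|].
      apply (kchainS W e L 2 x y y Hx Hxy). constructor. exact (kchain_start Hyz). }
  assert (HB : is_block e r 2 2 C).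
  { exists N. split; [intros x Hx; exact (kchain_end Hx) | ].
    split; [exists v; constructor; exact Hv|]. split.
    - intros x y Hx Hy. apply lift; [|exact Hx].
      eapply kchain_app; [apply kchain_rev; [exact Hs|exact Hx]| exact Hy].
    - intros B' Hsub HL Hcon x Hx. unfold C. apply (kchain_mono HL).
      apply Hcon; [apply Hsub; constructor; exact Hv| exact Hx]. }
  exists (exist _ C HB). simpl. constructor; exact Hv. Qed.

Lemma blk_layer {W} {e : W -> W -> Prop} {r} (B : skel_V e r 2 2) v :
  proj1_sig B v -> exists N, layer W e r 2 N v.
Proof. destruct B as [P h]; simpl. destruct h as [N [L _]]; eauto. Qed.

Lemma blk_incl {W} (e : W -> W -> Prop) (Hs : symmetric_graph e) r (B1 B2 : skel_V e r 2 2) u w N :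
  proj1_sig B1 u -> proj1_sig B2 w -> layer W e r 2 N u -> layer W e r 2 N w ->
  dist_le e u w 2 -> forall x, proj1_sig B2 x -> proj1_sig B1 x.
Proof. destruct B1 as [P1 h1], B2 as [P2 h2]; simpl.
  destruct h1 as [N1 [L1 [_ [C1 M1]]]], h2 as [N2 [L2 [_ [C2 M2]]]].
  intros Hu Hw Lu Lw Huw.
  assert (N1 = N) by (eapply layer_unique; eauto).
  assert (N2 = N) by (eapply layer_unique; eauto). subst.
  intros x0 hx0. apply (M1 (fun x => P1 x \/ P2 x)); [intros; left; auto | intros x [h|h]; auto | | right; exact hx0].
  - intros x y [hx|hx] [hy|hy].
    + apply (kchain_mono (X := P1)); [tauto|]. apply C1; auto.
    + eapply kchain_app; [apply (kchain_mono (X := P1)); [tauto| apply (C1 x u); auto]|].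
      apply (kchainS W e _ 2 u w y (or_introl Hu) Huw).
      apply (kchain_mono (X := P2)); [tauto| apply (C2 w y); auto].
    + eapply kchain_app; [apply (kchain_mono (X := P2)); [tauto| apply (C2 x w); auto]|].
      apply (kchainS W e _ 2 w u y (or_intror Hw)); [apply dist_le_sym; auto|].
      apply (kchain_mono (X := P1)); [tauto| apply (C1 u y); auto].
    + apply (kchain_mono (X := P2)); [tauto|]. apply C2; auto.
Qed.

Lemma blk_eq {W} (e : W -> W -> Prop) (Hs : symmetric_graph e) r (B1 B2 : skel_V e r 2 2) u w N :
  proj1_sig B1 u -> proj1_sig B2 w -> layer W e r 2 N u -> layer W e r 2 N w ->
  dist_le e u w 2 -> B1 = B2.
Proof. intros Hu Hw Lu Lw Huw.
  pose proof (blk_incl e Hs r B1 B2 u w N Hu Hw Lu Lw Huw) as I1.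
  pose proof (blk_incl e Hs r B2 B1 w u N Hw Hu Lw Lu (dist_le_sym e Hs _ _ _ Huw)) as I2.
  destruct B1 as [P1 h1], B2 as [P2 h2]; simpl in *.
  assert (P1 = P2) by (apply functional_extensionality; intro x;
    apply propositional_extensionality; split; auto).
  subst. f_equal. apply proof_irrelevance. Qed.

Definition Dl {W} {e : W -> W -> Prop} {r} (A B : skel_V e r 2 2) (L : nat) : Prop :=
  exists L', (L' <= L)%nat /\ walk (skel_adj e r 2 2) L' A B.

Lemma Dl_step {W} {e : W -> W -> Prop} {r} (A B : skel_V e r 2 2) u w :
  proj1_sig A u -> proj1_sig B w -> e u w -> Dl A B 1.
Proof. intros Hu Hw Huw. destruct (classic (A = B)) as [h|h].
  - subst. exists 0%nat; split; [lia|constructor].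
  - exists 1%nat; split; [lia|]. econstructor; [split; [exact h| exists u, w; auto] | constructor]. Qed.

Lemma Dl_trans {W} {e : W -> W -> Prop} {r} (A B C : skel_V e r 2 2) L1 L2 :
  Dl A B L1 -> Dl B C L2 -> Dl A C (L1 + L2).
Proof. intros [a [ha Ha]] [b [hb Hb]]. exists (a+b)%nat; split; [lia| eapply walk_app; eauto]. Qed.

Lemma Dl_mono {W} {e : W -> W -> Prop} {r} (A B : skel_V e r 2 2) L1 L2 :
  Dl A B L1 -> (L1 <= L2)%nat -> Dl A B L2.
Proof. intros [a [ha Ha]] h. exists a; split; [lia|auto]. Qed.

Lemma nbr_block {W} (e : W -> W -> Prop) (Hs : symmetric_graph e) r (A : skel_V e r 2 2) a w :
  proj1_sig A a -> e a w -> exists C : skel_V e r 2 2, proj1_sig C w.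
Proof. intros HA Haw. destruct (blk_layer A a HA) as [N HN].
  apply layer_Z in HN as [d [[[m [hm Hm]] _] _]].
  destruct (dist_le_eq e (S d) w r) as [d' Hd'].
  { exists (S m); split; [lia| econstructor; [apply Hs; exact Haw| exact Hm]]. }
  destruct (layer_exists e r w d' Hd') as [N' HN']. eapply block_exists; eauto. Qed.

Lemma three_step {W} (e : W -> W -> Prop) (Hs : symmetric_graph e) r
  (b0 b1 b2 b3 : skel_V e r 2 2) v0 v1 v2 v3 :
  proj1_sig b0 v0 -> proj1_sig b1 v1 -> proj1_sig b2 v2 -> proj1_sig b3 v3 ->
  e v0 v1 -> e v1 v2 -> e v2 v3 -> Dl b0 b3 2.
Proof. intros H0 H1 H2 H3 E01 E12 E23.
  destruct (blk_layer b0 v0 H0) as [N0 L0].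
  destruct (blk_layer b1 v1 H1) as [N1 L1].
  destruct (blk_layer b2 v2 H2) as [N2 L2].
  destruct (blk_layer b3 v3 H3) as [N3 L3].
  assert (D1 : forall x y, e x y -> dist_le e x y 2).
  { intros x y h. exists 1%nat; split; [lia| econstructor; [exact h| constructor]]. }
  assert (D2 : forall x y z, e x y -> e y z -> dist_le e x z 2).
  { intros x y z h h'. exists 2%nat; split; [lia| econstructor; [exact h| econstructor; [exact h'|constructor]]]. }
  pose proof (Dl_step b0 b1 v0 v1 H0 H1 E01) as S01.
  pose proof (Dl_step b1 b2 v1 v2 H1 H2 E12) as S12.
  pose proof (Dl_step b2 b3 v2 v3 H2 H3 E23) as S23.
  destruct (Z.eq_dec N0 N2) as [h|h02].
  { subst. rewrite (blk_eq e Hs r b0 b2 v0 v2 N2 H0 H2 L0 L2 (D2 _ _ _ E01 E12)).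
    eapply Dl_mono; [exact S23| lia]. }
  destruct (Z.eq_dec N1 N3) as [h|h13].
  { subst. rewrite <- (blk_eq e Hs r b1 b3 v1 v3 N3 H1 H3 L1 L3 (D2 _ _ _ E12 E23)).
    eapply Dl_mono; [exact S01| lia]. }
  destruct (Z.eq_dec N0 N1) as [h|h01].
  { subst. rewrite (blk_eq e Hs r b0 b1 v0 v1 N1 H0 H1 L0 L1 (D1 _ _ E01)).
    exact (Dl_trans b1 b2 b3 1 1 S12 S23). }
  destruct (Z.eq_dec N1 N2) as [h|h12].
  { subst. rewrite <- (blk_eq e Hs r b1 b2 v1 v2 N2 H1 H2 L1 L2 (D1 _ _ E12)) in S23.
    exact (Dl_trans b0 b1 b3 1 1 S01 S23). }
  destruct (Z.eq_dec N2 N3) as [h|h23].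
  { subst. rewrite (blk_eq e Hs r b2 b3 v2 v3 N3 H2 H3 L2 L3 (D1 _ _ E23)) in S12.
    exact (Dl_trans b0 b1 b3 1 1 S01 S12). }
  exfalso.
  apply layer_Z in L0 as [d0 [Q0 h0]]. apply layer_Z in L1 as [d1 [Q1 h1]].
  apply layer_Z in L2 as [d2 [Q2 h2]]. apply layer_Z in L3 as [d3 [Q3 h3]].
  pose proof (nbr_dist e Hs r _ _ _ _ E01 Q0 Q1).
  pose proof (nbr_dist e Hs r _ _ _ _ (Hs _ _ E01) Q1 Q0).
  pose proof (nbr_dist e Hs r _ _ _ _ E12 Q1 Q2).
  pose proof (nbr_dist e Hs r _ _ _ _ (Hs _ _ E12) Q2 Q1).
  pose proof (nbr_dist e Hs r _ _ _ _ E23 Q2 Q3).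
  pose proof (nbr_dist e Hs r _ _ _ _ (Hs _ _ E23) Q3 Q2).
  lia. Qed.

Lemma main_ind {W} (e : W -> W -> Prop) (Hs : symmetric_graph e) r :
  forall m a b, walk e m a b -> forall A B : skel_V e r 2 2, proj1_sig A a -> proj1_sig B b ->
  exists L, (3 * L <= 2 * m + 2)%nat /\ walk (skel_adj e r 2 2) L A B.
Proof. intro m. induction m as [m IH] using lt_wf_ind. intros a b Hw A B HA HB.
  destruct Hw as [a | m1 a v1 b E1 Hw1].
  { exists 0%nat. split; [lia|]. destruct (blk_layer A a HA) as [N LN].
    rewrite (blk_eq e Hs r A B a a N HA HB LN LN (ex_intro _ 0%nat (conj (Nat.le_0_l 2) (walk0 _ _ a)))).
    constructor. }
  destruct (nbr_block e Hs r A a v1 HA E1) as [C1 HC1].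
  destruct Hw1 as [v1 | m2 v1 v2 b E2 Hw2].
  { destruct (Dl_step A B a v1 HA HB E1) as [L [hL HL]]. exists L; split; [lia|auto]. }
  destruct (nbr_block e Hs r C1 v1 v2 HC1 E2) as [C2 HC2].
  destruct Hw2 as [v2 | m3 v2 v3 b E3 Hw3].
  { destruct (Dl_trans _ _ _ _ _ (Dl_step A C1 a v1 HA HC1 E1) (Dl_step C1 B v1 v2 HC1 HB E2))
      as [L [hL HL]]. exists L; split; [lia|auto]. }
  destruct (nbr_block e Hs r C2 v2 v3 HC2 E3) as [C3 HC3].
  destruct (three_step e Hs r A C1 C2 C3 a v1 v2 v3 HA HC1 HC2 HC3 E1 E2 E3) as [L1 [hL1 HL1]].
  destruct (IH m3 ltac:(lia) v3 b Hw3 C3 B HC3 HB) as [L2 [hL2 HL2]].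
  exists (L1 + L2)%nat. split; [lia| eapply walk_app; eauto]. Qed.

Lemma skel_sym {V} (adj : V -> V -> Prop) (Hsym : symmetric_graph adj) x0 lam k :
  symmetric_graph (skel_adj adj x0 lam k).
Proof. intros B1 B2 [Hne [x [y [H1 [H2 H3]]]]]. split.
  - intro h; apply Hne; symmetry; exact h.
  - exists y, x; auto. Qed.

Theorem lemma6 (V : Type) (adj : V -> V -> Prop) (x0 : V) (lam : R) (k : nat)
  (Hsym : symmetric_graph adj) (Hconn : connected_graph adj)
  (Hlam : 1 <= lam) (Hk : (1 <= k)%nat)
  (r : skel_V adj x0 lam k) (Hr : proj1_sig r x0)
  (X Y : skel_V (skel_adj adj x0 lam k) r 2 2 -> Prop) (n : nat) (Hn : (1 < n)%nat)
  (Hdisj : r_disjoint (skel_adj (skel_adj adj x0 lam k) r 2 2) X Y (INR n)) :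
  r_disjoint (skel_adj adj x0 lam k)
    (skel_preimage (skel_adj adj x0 lam k) r 2 2 X)
    (skel_preimage (skel_adj adj x0 lam k) r 2 2 Y)
    (INR n + INR n / 2).
Proof.
  intros a b m [A [HXA HAa]] [B [HYB HBb]] Hw.
  destruct (main_ind _ (skel_sym adj Hsym x0 lam k) r m a b Hw A B HAa HBb) as [L [hL HL]].
  pose proof (Hdisj A B L HXA HYB HL) as h. apply INR_lt in h.
  assert (H : (3 * n + 1 <= 2 * m)%nat) by lia.
  apply le_INR in H. rewrite plus_INR, !mult_INR in H. simpl in H. lra.
Qed.
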